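(* For any fixed $t\in\mathbb N$, $$\|\pi_h-\pi_t\|_{\mathrm{TV}}=\mathbf E\big[\|\pi_h-\pi_t\|_{\mathrm{TV}}\big]+o_{\mathbf P}(1),$$ where $o_{\mathbf P}(1)$ denotes a term tending to $0$ in probability as $n\to\infty$ and the expectation is over the environment.
   Context: Configuration model: for each $n$, $(d_i^-)_{1\le i\le n}$, $(d_i^+)_{1\le i\le n}$ positive integers with $\sum_id_i^-=\sum_id_i^+=m$; each vertex $i\in V=\{1,\dots,n\}$ carries a set $E_i^+$ of $d_i^+$ tails and $E_i^-$ of $d_i^-$ heads; the environment $\omega$ is a uniformly random bijection from tails to heads, $\omega(e)=f$ an arc from the vertex of $e$ to that of $f$; $P(i,j)=\frac1{d_i^+}|\{e\in E_i^+:\omega(e)\in E_j^-\}|$. Standing assumption: $\min_i\min(d_i^+,d_i^-)\ge2$ and $\Delta:=\max_i\max(d_i^+,d_i^-)$ bounded uniformly in $n$. $h=\lfloor\frac{\ln n}{10\ln\Delta}\rfloor$, $\pi_0(i)=d_i^-/m$, $\pi_s=\pi_0P^s$. *)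

(* Defs.v *)
From HB Require Import structures.
From mathcomp Require Import all_boot all_order all_algebra.
From mathcomp Require Import all_classical all_reals all_analysis.
Set Implicit Arguments. Unset Strict Implicit. Unset Printing Implicit Defensive.
Import Order.TTheory GRing.Theory Num.Theory.
Local Open Scope ring_scope.

Section Config.
Variable R : realType.
Variable n : nat.
Variables (dm dp : 'I_n -> nat).  (* in-degrees d_i^-, out-degrees d_i^+ *)

Definition tails := {i : 'I_n & 'I_(dp i)}.
Definition heads := {i : 'I_n & 'I_(dm i)}.

(* environments: bijections tails -> heads (injective maps between sets of
   equal cardinality m); the probability is uniform on this set *)
Definition envs : {set {ffun tails -> heads}} :=
  [set w : {ffun tails -> heads} | injectiveb w].

Definition Pmat (w : {ffun tails -> heads}) : 'M[R]_n :=
  \matrix_(i, j) ((#|[set e : tails | (tag e == i) && (tag (w e) == j)]|)%:R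
                   / (dp i)%:R).

Definition mtot : nat := (\sum_(i < n) dm i)%N.

Definition pi0 : 'rV[R]_n := \row_i ((dm i)%:R / mtot%:R).

Definition pis (w : {ffun tails -> heads}) (s : nat) : 'rV[R]_n :=
  iter s (fun v => v *m Pmat w) pi0.

Definition tvdist (mu nu : 'rV[R]_n) : R :=
  \big[Num.max/0]_(A : {set 'I_n}) `|\sum_(i in A) (mu ord0 i - nu ord0 i)|.

Definition Delta : nat := (\max_(i < n) maxn (dp i) (dm i))%N.

Definition hh : nat := Num.truncn (ln (n%:R : R) / (10 * ln (Delta%:R : R))).

Definition Xtv (t : nat) (w : {ffun tails -> heads}) : R :=
  tvdist (pis w hh) (pis w t).

Definition Eenv (X : {ffun tails -> heads} -> R) : R :=
  (\sum_(w in envs) X w) / (#|envs|)%:R.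

Definition Penv (A : pred {ffun tails -> heads}) : R :=
  (#|[set w in envs | A w]|)%:R / (#|envs|)%:R.

End Config.

Definition dev_prob (R : realType) (dm dp : forall n, 'I_n -> nat)
    (t : nat) (eps : R) (n : nat) : R :=
  @Penv R n (dm n) (dp n)
    (fun w => eps < `|@Xtv R n (dm n) (dp n) t w
                       - @Eenv R n (dm n) (dp n) (@Xtv R n (dm n) (dp n) t)|).

(* Main.v *)
Require Import Defs.
From HB Require Import structures.
From mathcomp Require Import all_boot all_order all_algebra.
From mathcomp Require Import all_fingroup.
From mathcomp Require Import all_classical all_reals all_analysis.
From mathcomp Require Import ring lra.
Import Order.TTheory GRing.Theory Num.Theory.

Module Helpers.
Set Implicit Arguments. Unset Strict Implicit. Unset Printing Implicit Defensive.
Local Open Scope ring_scope.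
Section PermVar.
Variables (R : realFieldType) (T H : finType).
Variable f : {ffun T -> H} -> R.

Definition swapf (w : {ffun T -> H}) (a b : T) : {ffun T -> H} :=
  [ffun x => w (tperm a b x)].
Definition meanS (S : {set {ffun T -> H}}) := (\sum_(w in S) f w) / #|S|%:R.
Definition VS (S : {set {ffun T -> H}}) := \sum_(w in S) (f w - meanS S)^+2.

Lemma sum_meanS (S : {set {ffun T -> H}}) : \sum_(w in S) f w = #|S|%:R * meanS S.
Proof.
rewrite /meanS; have [S0|nz] := eqVneq #|S| 0%N.
  rewrite S0; move: S0.
  move=> S0; rewrite mul0r; apply: big1 => w; by rewrite (card0_eq S0).
by rewrite mulrC divfK // pnatr_eq0.
Qed.

Lemma sq_decomp (S : {set {ffun T -> H}}) a :
  \sum_(w in S) (f w - a)^+2 = VS S + #|S|%:R * (meanS S - a)^+2.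
Proof.
rewrite /VS.
have -> : \sum_(w in S) (f w - a)^+2 =
  \sum_(w in S) ((f w - meanS S)^+2 + (2 * (meanS S - a)) * (f w - meanS S)
                 + (meanS S - a)^+2).
  by apply: eq_bigr => w _; rewrite -[f w - a](subrKA (meanS S)); ring.
rewrite !big_split /= -mulr_sumr sumrB sum_meanS sumr_const.
by rewrite sumr_const -[meanS S *+ _]mulr_natl subrr mulr0 addr0 mulr_natl.
Qed.

Lemma VS_const (S : {set {ffun T -> H}}) x :
  (forall w, w \in S -> f w = x) -> VS S = 0.
Proof.
move=> Hx; have := sq_decomp S x.
rewrite big1 => [|w /Hx ->]; last by rewrite subrr expr2 mulr0.
move=> /esym/eqP; rewrite paddr_eq0.
- by case/andP=> /eqP.
- by apply: sumr_ge0 => w _; rewrite sqr_ge0.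
- by rewrite mulr_ge0 ?ler0n ?sqr_ge0.
Qed.

Hypothesis cardTH : #|T| = #|H|.
Variable c : R.
Hypothesis c0 : 0 <= c.
Hypothesis Lip : forall (w : {ffun T -> H}) a b, injective w -> `|f w - f (swapf w a b)| <= c.

Definition Cset (F : {set T}) (g : {ffun T -> H}) :=
  [set w : {ffun T -> H} | injectiveb w && [forall x in F, w x == g x]].

Definition pre (w : {ffun T -> H}) (y : H) (e0 : T) := odflt e0 [pick x | w x == y].

Lemma preP (w : {ffun T -> H}) y e0 : injective w -> w (pre w y e0) = y.
Proof.
move=> iw; rewrite /pre; case: pickP => [x /eqP //|none].
have /codomP [x yE] := inj_card_onto iw (eq_leq (esym cardTH)) y.
by have := none x; rewrite yE eqxx.
Qed.

Lemma swapf_inj (w : {ffun T -> H}) a b : injective w -> injective (swapf w a b).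
Proof. by move=> iw x y; rewrite !ffunE => /iw; apply: perm_inj. Qed.

Lemma swapfK w a b : swapf (swapf w a b) a b = w.
Proof. by apply/ffunP=> x; rewrite !ffunE tpermK. Qed.

Lemma sum_bij (A B : {set {ffun T -> H}}) (phi psi : {ffun T -> H} -> {ffun T -> H})
   (G : {ffun T -> H} -> R) :
  {in A, forall a, phi a \in B} -> {in B, forall b, psi b \in A} ->
  {in A, forall a, psi (phi a) = a} -> {in B, forall b, phi (psi b) = b} ->
  \sum_(b in B) G b = \sum_(a in A) G (phi a).
Proof.
move=> pAB pBA pa pb; rewrite (reindex_onto phi psi) //.
apply: eq_bigl => a; apply/idP/idP.
  by case/andP=> /pBA + /eqP => /[swap] ->.
by move=> aA; rewrite pAB //= pa // eqxx.
Qed.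

Section Fiber.
Variables (F : {set T}) (g : {ffun T -> H}) (e0 : T).
Hypothesis e0F : e0 \notin F.
Let C := Cset F g.
Definition Ch h := [set w in C | w e0 == h].

Lemma Ch_inj h w : w \in Ch h -> injective w.
Proof. by rewrite !inE => /andP [/andP [/injectiveP ? _] _]. Qed.

Lemma phi_in h h' w w' : w \in Ch h -> w' \in Ch h' ->
  swapf w e0 (pre w h' e0) \in Ch h'.
Proof.
move=> wC w'C; have iw := Ch_inj wC; have iw' := Ch_inj w'C.
move: wC w'C; rewrite !inE => /andP [/andP [_ /forallP wg] /eqP we0]
                               /andP [/andP [_ /forallP w'g] /eqP w'e0].
set e' := pre w h' e0; have we' : w e' = h' := preP _ _ iw.
rewrite (introT (injectiveP _) (@swapf_inj w e0 e' iw)) /= ffunE tpermL we' eqxx andbT.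
apply/forallP => x; apply/implyP => xF.
have xe0 : x != e0 by apply: contraNneq e0F => <-.
have xe' : x != e'.
  apply/eqP => xe; move: (wg x) (w'g x); rewrite xF /= => /eqP wx /eqP w'x.
  have : w' x = w' e0 by rewrite w'x -wx xe we' w'e0.
  by move/iw'/eqP; rewrite (negbTE xe0).
rewrite ffunE tpermD 1?eq_sym //; have := wg x; rewrite xF.
by move=> /= Hx; rewrite eq_sym.
Qed.

Lemma phi_back h h' w w' : w \in Ch h -> w' \in Ch h' ->
  let u := swapf w e0 (pre w h' e0) in swapf u e0 (pre u h e0) = w.
Proof.
move=> wC w'C /=; have iw := Ch_inj wC.
set e' := pre w h' e0; set u := swapf w e0 e'.
have iu : injective u := @swapf_inj w e0 e' iw.
have ue' : u e' = h by rewrite ffunE tpermR; move: wC; rewrite !inE => /andP [_ /eqP].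
have -> : pre u h e0 = e'.
  by apply: (iu); rewrite ue' (preP h e0 iu).
by rewrite /u swapfK.
Qed.

Lemma mean_pair h h' w1 w2 : w1 \in Ch h -> w2 \in Ch h' ->
  `|meanS (Ch h) - meanS (Ch h')| <= c.
Proof.
move=> w1C w2C.
pose phi := fun w : {ffun T -> H} => swapf w e0 (pre w h' e0).
pose psi := fun w : {ffun T -> H} => swapf w e0 (pre w h e0).
have pAB : {in Ch h, forall a, phi a \in Ch h'} by move=> a aC; exact: phi_in aC w2C.
have pBA : {in Ch h', forall b, psi b \in Ch h} by move=> b bC; exact: phi_in bC w1C.
have pa : {in Ch h, forall a, psi (phi a) = a} by move=> a aC; exact: phi_back aC w2C.
have pb : {in Ch h', forall b, phi (psi b) = b} by move=> b bC; exact: phi_back bC w1C.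
have Hs := sum_bij f pAB pBA pa pb.
have Hc := sum_bij (fun _ => 1) pAB pBA pa pb.
rewrite !sumr_const in Hc.
have cpos : (0 < #|Ch h|)%N by apply/card_gt0P; exists w1.
have cR : #|Ch h|%:R != 0 :> R by rewrite pnatr_eq0 -lt0n.
rewrite /meanS Hs -[_ *+ #|Ch h'|]mulr_natl -[_ *+ #|Ch h|]mulr_natl mulr1 mulr1 in Hc *.
rewrite Hc -mulrBl -sumrB normrM normfV normr_nat ler_pdivrMr ?ltr0n //.
apply: le_trans (ler_norm_sum _ _ _) _.
rewrite mulr_natr -sumr_const; apply: ler_sum => a aC.
by apply: Lip; apply: Ch_inj aC.
Qed.

End Fiber.

Lemma part_sum (F : {set T}) (g : {ffun T -> H}) (e0 : T) (G : {ffun T -> H} -> R) :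
  \sum_(w in Cset F g) G w = \sum_h \sum_(w in Ch F g e0 h) G w.
Proof.
rewrite (partition_big (fun w : {ffun T -> H} => w e0) predT) //=.
by apply: eq_bigr => h _; apply: eq_bigl => w; rewrite !inE.
Qed.

Lemma Ch_Cset (F : {set T}) (g : {ffun T -> H}) (e0 : T) h w1 : w1 \in Ch F g e0 h -> Ch F g e0 h = Cset (e0 |: F) w1.
Proof.
rewrite !inE => /andP [/andP [iw1 /forallP w1g] /eqP w1e0].
apply/setP => w; rewrite !inE; apply/idP/idP.
  case/andP => /andP [-> /forallP wg] /eqP we0 /=.
  apply/forallP => x; apply/implyP; rewrite !inE => /orP [/eqP ->|xF].
    by rewrite we0 w1e0.
  by move: (wg x) (w1g x); rewrite xF /= => /eqP -> /eqP ->.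
case/andP => -> /forallP ww1 /=.
have := ww1 e0; rewrite !inE eqxx /= => /eqP ->; rewrite w1e0 eqxx andbT.
apply/forallP => x; apply/implyP => xF.
by move: (ww1 x) (w1g x); rewrite !inE xF orbT /= => /eqP -> /eqP ->.
Qed.

Lemma card_part (F : {set T}) (g : {ffun T -> H}) (e0 : T) :
  #|Cset F g|%:R = \sum_h (#|Ch F g e0 h|%:R : R).
Proof.
have := part_sum F g e0 (fun _ => 1); rewrite sumr_const => ->.
by apply: eq_bigr => h _; rewrite sumr_const.
Qed.

Lemma mean_bound (F : {set T}) (g : {ffun T -> H}) (e0 : T) h w1 : e0 \notin F -> w1 \in Ch F g e0 h ->
  `|meanS (Ch F g e0 h) - meanS (Cset F g)| <= c.
Proof.
move=> e0F w1C.
have Cpos : (0 < #|Cset F g|)%N.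
  by apply/card_gt0P; exists w1; move: w1C; rewrite inE => /andP [].
have key : #|Cset F g|%:R * (meanS (Ch F g e0 h) - meanS (Cset F g)) =
   \sum_h' #|Ch F g e0 h'|%:R * (meanS (Ch F g e0 h) - meanS (Ch F g e0 h')).
  rewrite mulrBr -sum_meanS (part_sum F g e0) (card_part F g e0) mulr_suml -sumrB.
  by apply: eq_bigr => h' _; rewrite mulrBr sum_meanS.
have : `|#|Cset F g|%:R * (meanS (Ch F g e0 h) - meanS (Cset F g))| <=
        #|Cset F g|%:R * c.
  rewrite key (card_part F g e0) mulr_suml.
  apply: le_trans (ler_norm_sum _ _ _) _; apply: ler_sum => h' _.
  rewrite normrM normr_nat.
  have [E|/card_gt0P [w2 w2C]] := posnP #|Ch F g e0 h'|.
    by rewrite E !mul0r.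
  by apply: ler_wpM2l; [exact: ler0n | exact: mean_pair w1C w2C].
by rewrite normrM normr_nat ler_pM2l // ltr0n.
Qed.

Lemma VS_Cset k : forall (F : {set T}) (g : {ffun T -> H}), #|~: F| = k ->
  VS (Cset F g) <= #|Cset F g|%:R * k%:R * c^+2.
Proof.
elim: k => [|k IH] F g Hk.
  have E := cards0_eq Hk.
  rewrite (@VS_const _ (f g)); first by rewrite mulr0 mul0r.
  move=> w; rewrite inE => /andP [_ /forallP wg]; congr f; apply/ffunP => x.
  have : x \in ~: F = false by rewrite E inE.
  by rewrite inE => /negbFE xF; move: (wg x); rewrite xF => /eqP.
have [e0 e0F'] : exists e0, e0 \in ~: F by apply/card_gt0P; rewrite Hk.
have e0F : e0 \notin F by move: e0F'; rewrite inE.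
have Hk' : #|~: (e0 |: F)| = k.
  have -> : ~: (e0 |: F) = (~: F) :\ e0 by apply/setP => x; rewrite !inE negb_or.
  by move: Hk; rewrite (cardsD1 e0) e0F' add1n => -[].
rewrite /VS (part_sum F g e0) (card_part F g e0) mulr_suml mulr_suml.
apply: ler_sum => h _; rewrite sq_decomp.
have [E|/card_gt0P [w1 w1C]] := posnP #|Ch F g e0 h|.
  by rewrite (cards0_eq E) /VS big_set0 cards0 !mul0r addr0.
have mb := mean_bound e0F w1C.
have IHh := IH (e0 |: F) w1 Hk'; rewrite -(Ch_Cset w1C) in IHh.
rewrite -natr1 mulrDr mulr1 mulrDl; apply: lerD => //.
apply: ler_wpM2l; first exact: ler0n.
by move: mb; rewrite ler_norml => /andP [h1 h2]; nra.
Qed.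
End PermVar.

Lemma card_tag (I : finType) (T_ : I -> finType) i :
  #|[set e : {i : I & T_ i} | tag e == i]| = #|T_ i|.
Proof.
have -> : [set e : {i : I & T_ i} | tag e == i] = (fun x : T_ i => Tagged T_ x) @: setT.
  apply/setP => e; rewrite inE; apply/eqP/imsetP.
    by move=> E; exists (etagged E); rewrite ?inE ?etaggedK.
  by case=> x _ ->.
rewrite card_imset; last by move=> x y; apply: eq_from_Tagged.
apply: eq_card => x; rewrite /in_mem /=; exact: (in_setT x).
Qed.

Lemma card_sum_part (aT J : finType) (A : {set aT}) (p : aT -> J) :
  (\sum_j #|[set e in A | p e == j]| = #|A|)%N.
Proof.
rewrite -sum1_card (partition_big p predT) //; apply: eq_bigr => j _.
by rewrite -sum1_card; apply: eq_bigl => e; rewrite !inE.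
Qed.

Section Chain.
Variable R : realType.
Variables (n : nat) (dm dp : 'I_n -> nat).
Hypothesis dp_pos : forall i, (0 < dp i)%N.
Local Notation T := (tails dp).
Local Notation Hd := (heads dm).

Definition cnt (w : {ffun T -> Hd}) i j :=
  #|[set e : T | (tag e == i) && (tag (w e) == j)]|.

Lemma PmatE (w : {ffun T -> Hd}) i j : Pmat R w i j = (cnt w i j)%:R / (dp i)%:R.
Proof. by rewrite mxE. Qed.

Lemma Pmat_ge0 (w : {ffun T -> Hd}) i j : 0 <= Pmat R w i j.
Proof. by rewrite PmatE divr_ge0 ?ler0n. Qed.

Lemma row_cnt (w : {ffun T -> Hd}) i : (\sum_j cnt w i j = dp i)%N.
Proof.
rewrite -[RHS]card_ord -(card_tag (fun i => 'I_(dp i)) i) -(card_sum_part _ (fun e => tag (w e))).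
by apply: eq_bigr => j _; apply: eq_card => e; rewrite !inE.
Qed.

Lemma Pmat_row (w : {ffun T -> Hd}) i : \sum_j Pmat R w i j = 1.
Proof.
under eq_bigr do rewrite PmatE.
by rewrite -mulr_suml -natr_sum row_cnt divff // pnatr_eq0 -lt0n.
Qed.

Lemma col_cnt (w : {ffun T -> Hd}) j : injective w -> (\sum_i cnt w i j <= dm j)%N.
Proof.
move=> iw.
have -> : (\sum_i cnt w i j = #|[set e : T | tag (w e) == j]|)%N.
  rewrite -(card_sum_part _ (fun e : T => tag e)).
  by apply: eq_bigr => i _; apply: eq_card => e; rewrite !inE andbC.
rewrite -[dm j]card_ord -(card_tag (fun i => 'I_(dm i)) j) -(card_imset _ iw).
apply: subset_leq_card; apply/fintype.subsetP => y /imsetP [e]; rewrite !inE => + ->; done.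
Qed.

Lemma Pmat_col (w : {ffun T -> Hd}) j : injective w -> \sum_i Pmat R w i j <= (dm j)%:R.
Proof.
move=> iw; apply: le_trans (_ : \sum_i (cnt w i j)%:R <= _).
  apply: ler_sum => i _; rewrite PmatE ler_pdivrMr ?ltr0n //.
  by rewrite ler_peMr ?ler0n // ler1n.
by rewrite -natr_sum ler_nat col_cnt.
Qed.

Definition norm1 (v : 'rV[R]_n) := \sum_j `|v ord0 j|.

Lemma norm1_ge0 v : 0 <= norm1 v.
Proof. by apply: sumr_ge0 => j _. Qed.

Lemma norm1D (u v : 'rV[R]_n) : norm1 (u + v) <= norm1 u + norm1 v.
Proof. by rewrite /norm1 -big_split; apply: ler_sum => j _; rewrite mxE ler_normD. Qed.

Lemma norm1_mul (v : 'rV[R]_n) (w : {ffun T -> Hd}) : norm1 (v *m Pmat R w) <= norm1 v.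
Proof.
rewrite /norm1; under eq_bigr do rewrite mxE.
apply: le_trans (_ : \sum_j \sum_i `|v ord0 i| * Pmat R w i j <= _).
  apply: ler_sum => j _; apply: le_trans (ler_norm_sum _ _ _) _.
  by apply: ler_sum => i _; rewrite normrM (ger0_norm (Pmat_ge0 _ _ _)).
rewrite exchange_big /=; apply: ler_sum => i _.
by rewrite -mulr_sumr Pmat_row mulr1.
Qed.

Lemma sum_eq1 (x : 'I_n) : \sum_i ((i == x)%:R : R) = 1.
Proof. by rewrite (bigD1 x) //= eqxx big1 ?addr0 // => i /negbTE ->. Qed.

Lemma cnt_swap (w : {ffun T -> Hd}) a b i j : i != tag a -> i != tag b ->
  cnt (swapf w a b) i j = cnt w i j.
Proof.
move=> ia ib; apply: eq_card => e; rewrite !inE ffunE.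
case: eqP => //= ei; rewrite tpermD //.
  by apply: contra_neq ia => ->; rewrite ei.
by apply: contra_neq ib => ->; rewrite ei.
Qed.

Lemma rdiff_bound (w : {ffun T -> Hd}) a b i :
  \sum_j `|Pmat R w i j - Pmat R (swapf w a b) i j| <=
   2 * ((i == tag a)%:R + (i == tag b)%:R).
Proof.
have H2 : \sum_j `|Pmat R w i j - Pmat R (swapf w a b) i j| <= 2.
  apply: le_trans (_ : \sum_j (Pmat R w i j + Pmat R (swapf w a b) i j) <= _).
    apply: ler_sum => j _; apply: le_trans (ler_normB _ _) _.
    by rewrite !ger0_norm ?Pmat_ge0.
  by rewrite big_split /= !Pmat_row.
have [ia|ia] := eqVneq i (tag a).
  by apply: le_trans H2 _; rewrite ler_peMr // lerDl ler0n.
have [ib|ib] := eqVneq i (tag b).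
  by apply: le_trans H2 _; rewrite ler_peMr // lerDr ler0n.
rewrite big1 ?mulr0 // => j _.
by rewrite !PmatE cnt_swap // subrr normr0.
Qed.

Lemma norm1_swap (u : 'rV[R]_n) (w : {ffun T -> Hd}) a b M :
  (forall i, `|u ord0 i| <= M) ->
  norm1 (u *m (Pmat R w - Pmat R (swapf w a b))) <= 4 * M.
Proof.
move=> uM; rewrite /norm1; under eq_bigr do rewrite mxE.
apply: le_trans (_ : \sum_j \sum_i `|u ord0 i| *
   `|Pmat R w i j - Pmat R (swapf w a b) i j| <= _).
  apply: ler_sum => j _; apply: le_trans (ler_norm_sum _ _ _) _.
  by apply: ler_sum => i _; rewrite !mxE normrM.
rewrite exchange_big /=.
apply: le_trans (_ : \sum_i M * (2 * ((i == tag a)%:R + (i == tag b)%:R)) <= _).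
  apply: ler_sum => i _; rewrite -mulr_sumr.
  apply: ler_pM => //; first by apply: sumr_ge0 => j _.
  exact: rdiff_bound.
rewrite -mulr_sumr -mulr_sumr big_split /= !sum_eq1.
have M0 : 0 <= M by apply: le_trans (uM (tag a)).
lra.
Qed.


Lemma pisS (w : {ffun T -> Hd}) s : pis R w s.+1 = pis R w s *m Pmat R w.
Proof. by []. Qed.

Lemma dm_le_Delta j : (dm j <= Delta dm dp)%N.
Proof. by rewrite /Delta; apply: leq_trans (leq_maxr (dp j) (dm j)) (leq_bigmax (F := fun i => maxn (dp i) (dm i)) j). Qed.

Let D : R := (Delta dm dp)%:R.
Let m : R := (mtot dm)%:R.

Lemma pis_bound (w : {ffun T -> Hd}) s j : injective w ->
  0 <= pis R w s ord0 j <= D ^+ s.+1 / m.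
Proof.
move=> iw; elim: s j => [|s IH] j.
  rewrite /pis /= mxE expr1 divr_ge0 ?ler0n //=.
  by rewrite ler_wpM2r ?invr_ge0 ?ler0n // ler_nat dm_le_Delta.
rewrite pisS mxE; apply/andP; split.
  by apply: sumr_ge0 => i _; rewrite mulr_ge0 ?Pmat_ge0 //; case/andP: (IH i).
apply: le_trans (_ : \sum_i D ^+ s.+1 / m * Pmat R w i j <= _).
  apply: ler_sum => i _; rewrite ler_wpM2r ?Pmat_ge0 //; by case/andP: (IH i).
rewrite -mulr_sumr.
apply: le_trans (_ : D ^+ s.+1 / m * D <= _).
  rewrite ler_wpM2l ?divr_ge0 ?exprn_ge0 ?ler0n //.
  by apply: le_trans (Pmat_col j iw) _; rewrite ler_nat dm_le_Delta.
by rewrite [in X in _ <= X]exprSr mulrAC.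
Qed.

Lemma subr_ge0_of (x y : R) : x <= y -> 0 <= y - x.
Proof. by rewrite subr_ge0. Qed.

Lemma swap_diff (w : {ffun T -> Hd}) a b s : injective w -> (1 <= Delta dm dp)%N ->
  norm1 (pis R w s - pis R (swapf w a b) s) <= 4 * s%:R * D ^+ s / m.
Proof.
move=> iw D1; have iw' := @swapf_inj _ _ w a b iw.
have D1' : 1 <= D by rewrite ler1n.
have m0 : 0 <= m^-1 by rewrite invr_ge0 ler0n.
elim: s => [|s IH].
  by rewrite /norm1 big1 ?mul0r ?mulr0 ?mul0r // => j _; rewrite !mxE subrr normr0.
rewrite !pisS.
have -> : pis R w s *m Pmat R w - pis R (swapf w a b) s *m Pmat R (swapf w a b) =
   (pis R w s - pis R (swapf w a b) s) *m Pmat R w +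
   pis R (swapf w a b) s *m (Pmat R w - Pmat R (swapf w a b)).
  by rewrite mulmxBl mulmxBr addrA subrK.
apply: le_trans (norm1D _ _) _.
have B2 := @norm1_swap (pis R (swapf w a b) s) w a b (D ^+ s.+1 / m).
have B1 := norm1_mul (pis R w s - pis R (swapf w a b) s) w.
have : norm1 ((pis R w s - pis R (swapf w a b) s) *m Pmat R w) +
  norm1 (pis R (swapf w a b) s *m (Pmat R w - Pmat R (swapf w a b))) <=
  4 * s%:R * D ^+ s / m + 4 * (D ^+ s.+1 / m).
  apply: lerD; first exact: le_trans B1 IH.
  apply: B2 => i; have /andP [h1 h2] := pis_bound s i iw'.
  by rewrite ger0_norm.
move/le_trans; apply.
have x0 : 0 <= D ^+ s by rewrite exprn_ge0 // ler0n.
have s0 : 0 <= s%:R :> R by rewrite ler0n.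
rewrite exprS -natr1; set y := D ^+ s.
have h1 : s%:R * y <= s%:R * (D * y) by rewrite ler_wpM2l // ler_peMl.
have h2 := mulr_ge0 m0 ((subr_ge0_of h1)).
lra.
Qed.

Lemma sum_sub_le (F : 'I_n -> R) (A : {set 'I_n}) :
  (forall i, 0 <= F i) -> \sum_(i in A) F i <= \sum_i F i.
Proof.
move=> F0; rewrite [X in _ <= X](bigID (mem A)) /= lerDl.
by apply: sumr_ge0 => i _.
Qed.

Lemma tv_ge0 (a b : 'rV[R]_n) : 0 <= tvdist a b.
Proof. exact: bigmax_ge_id. Qed.

Lemma tv_le (a b a' b' : 'rV[R]_n) :
  tvdist a b <= tvdist a' b' + (norm1 (a - a') + norm1 (b - b')).
Proof.
rewrite {1}/tvdist; apply: bigmax_le.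
  by rewrite addr_ge0 ?tv_ge0 // addr_ge0 ?norm1_ge0.
move=> A _.
have -> : \sum_(i in A) (a ord0 i - b ord0 i) =
   \sum_(i in A) (a' ord0 i - b' ord0 i) + (\sum_(i in A) (a - a') ord0 i
      - \sum_(i in A) (b - b') ord0 i).
  rewrite -sumrB -big_split /=; apply: eq_bigr => i _; rewrite !mxE; ring.
apply: le_trans (ler_normD _ _) _; apply: lerD.
  rewrite /tvdist; exact: (le_bigmax 0 (fun A : {set 'I_n} => `|\sum_(i in A) (a' ord0 i - b' ord0 i)|) A).
apply: le_trans (ler_normB _ _) _; apply: lerD.
  apply: le_trans (ler_norm_sum _ _ _) _; exact: sum_sub_le.
apply: le_trans (ler_norm_sum _ _ _) _; exact: sum_sub_le.
Qed.

Lemma norm1_opp (v : 'rV[R]_n) : norm1 (- v) = norm1 v.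
Proof. by apply: eq_bigr => j _; rewrite mxE normrN. Qed.

Lemma tv_lip (a b a' b' : 'rV[R]_n) :
  `|tvdist a b - tvdist a' b'| <= norm1 (a - a') + norm1 (b - b').
Proof.
rewrite ler_norml; apply/andP; split; last first.
  rewrite lerBlDl; exact: tv_le.
have := tv_le a' b' a b; rewrite -[a' - a]opprB -[b' - b]opprB !norm1_opp => h; lra.
Qed.

Lemma Xtv_lip t (w : {ffun T -> Hd}) a b : injective w -> (1 <= Delta dm dp)%N ->
  `|Xtv R t w - Xtv R t (swapf w a b)| <=
   4 * (hh R dm dp)%:R * D ^+ (hh R dm dp) / m + 4 * t%:R * D ^+ t / m.
Proof.
move=> iw D1; apply: le_trans (tv_lip _ _ _ _) _.
by apply: lerD; apply: swap_diff.
Qed.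
End Chain.


Lemma cheb (R : realFieldType) (T H : finType) (f : {ffun T -> H} -> R) (S : {set {ffun T -> H}}) (eps : R) :
  0 < eps -> #|[set w in S | eps < `|f w - meanS f S|]|%:R * eps^+2 <= VS f S.
Proof.
move=> e0; rewrite /VS mulrC mulr_natr -sumr_const.
apply: le_trans (_ : \sum_(w in S) (if eps < `|f w - meanS f S| then eps^+2 else 0) <= _).
  rewrite big_mkcond [X in _ <= X]big_mkcond /=; apply: ler_sum => w _.
  by rewrite !inE; case: (w \in S) => //=; case: ifP.
apply: ler_sum => w _; case: ifP => [lt|_]; last exact: sqr_ge0.
rewrite -[X in _ <= X]real_normK ?num_real //.
have h1 := ltW lt; have h2 := ltW e0; nra.
Qed.

Section Final.
Variable R : realType.
Variables (n : nat) (dm dp : 'I_n -> nat).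
Hypothesis dp_pos : forall i, (0 < dp i)%N.
Hypothesis cardTH : #|{: tails dp}| = #|{: heads dm}|.
Local Notation T := (tails dp).
Local Notation Hd := (heads dm).

Lemma dev_n t (eps : R) : 0 < eps -> (1 <= Delta dm dp)%N ->
  @Penv R n dm dp (fun w => eps < `|@Xtv R n dm dp t w - @Eenv R n dm dp (@Xtv R n dm dp t)|) <=
  #|{: T}|%:R * (4 * (hh R dm dp)%:R * (Delta dm dp)%:R ^+ (hh R dm dp) / (mtot dm)%:R
     + 4 * t%:R * (Delta dm dp)%:R ^+ t / (mtot dm)%:R) ^+ 2 / eps ^+ 2.
Proof.
move=> e0 D1.
set c := (X in #|{: T}|%:R * X ^+ 2 / _).
have c0 : 0 <= c by rewrite /c addr_ge0 // !divr_ge0 ?mulr_ge0 ?exprn_ge0 ?ler0n.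
have rhs0 : 0 <= #|{: T}|%:R * c ^+ 2 / eps ^+ 2.
  by apply: divr_ge0; [apply: mulr_ge0 | ]; rewrite ?ler0n ?sqr_ge0.
rewrite /Penv.
have [E|/card_gt0P [w0 w0e]] := posnP #|envs dm dp|.
  by rewrite E invr0 mulr0.
have envsE : envs dm dp = Cset finset.set0 w0.
  apply/setP => w; rewrite !inE; case: injectiveb => //=.
  by apply/esym/forallP => x; rewrite inE.
have Lip : forall (w : {ffun T -> Hd}) a b, injective w ->
    `|@Xtv R n dm dp t w - @Xtv R n dm dp t (swapf w a b)| <= c.
  by move=> w a b iw; apply: Xtv_lip.
have V := @VS_Cset R _ _ (@Xtv R n dm dp t) cardTH c Lip #|{: T}| finset.set0 w0.
rewrite finset.setC0 cardsT in V; have {}V := V erefl.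
have Ch := @cheb R _ _ (@Xtv R n dm dp t) (envs dm dp) eps e0.
rewrite -envsE in V.
have -> : Eenv (@Xtv R n dm dp t) = meanS (@Xtv R n dm dp t) (envs dm dp) by [].
have Sp : 0 < (#|envs dm dp|)%:R :> R by rewrite ltr0n; apply/card_gt0P; exists w0.
rewrite ler_pdivrMr // mulrAC ler_pdivlMr ?exprn_gt0 //.
apply: le_trans Ch _; apply: le_trans V _.
by rewrite le_eqVlt; apply/orP; left; apply/eqP; ring.
Qed.
End Final.

Lemma hh_bound (R : realType) (n : nat) (dm dp : 'I_n -> nat) :
  (0 < n)%N -> (1 < Delta dm dp)%N ->
  (Delta dm dp ^ (10 * hh R dm dp) <= n)%N.
Proof.
move=> n0 D1; rewrite /hh.
set x : R := ln n%:R / (10 * ln (Delta dm dp)%:R).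
have lD : 0 < ln ((Delta dm dp)%:R : R) by apply: ln_gt0; rewrite ltr1n.
have ln0 : 0 <= ln (n%:R : R) by apply: ln_ge0; rewrite ler1n.
have x0 : 0 <= x by rewrite /x divr_ge0 // mulr_ge0 // ltW.
have := truncn_le x; rewrite x0 => hx.
rewrite -(ler_nat R) natrX.
have Dp : (0 : R) < (Delta dm dp)%:R by rewrite ltr0n; apply: ltn_trans D1.
rewrite -ler_ln ?posrE ?exprn_gt0 ?ltr0n //.
rewrite lnXn // -[X in X <= _]mulr_natl natrM.
move: hx; rewrite /x ler_pdivlMr ?mulr_gt0 //.
nra.
by apply: ltn_trans D1.
Qed.

Lemma card_tails (I : finType) (d : I -> nat) :
  #|{: {i : I & 'I_(d i)}}| = (\sum_i d i)%N.
Proof.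
rewrite -cardsT -(card_sum_part [set: {i : I & 'I_(d i)}] (fun e => tag e)).
apply: eq_bigr => i _; rewrite -[d i]card_ord -(card_tag (fun i => 'I_(d i)) i).
by apply: eq_card => e; rewrite !inE.
Qed.

Lemma E1_aux (R : realFieldType) (M u e : R) : M != 0 -> e != 0 ->
  M * (4 * u / M) ^+ 2 / e ^+ 2 = 16 / e ^+ 2 * (u ^+ 2 / M).
Proof. by move=> M0 e0; field; rewrite M0 e0. Qed.

Lemma E2_aux (R : realFieldType) (y z v e : R) :
  16 * y ^+ 2 / e ^+ 2 * (z ^+ 2 / v) = 16 / e ^+ 2 * ((y * z) ^+ 2 / v).
Proof. by ring. Qed.

Lemma per_n (R : realType) (n : nat) (dm dp : 'I_n -> nat) (t : nat) (eps : R) (D : nat) :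
  (0 < n)%N -> (forall i, (2 <= dm i)%N /\ (2 <= dp i)%N) ->
  (forall i, (dm i <= D)%N /\ (dp i <= D)%N) ->
  (\sum_i dm i = \sum_i dp i)%N -> 0 < eps ->
  @Penv R n dm dp (fun w => eps < `|@Xtv R n dm dp t w - @Eenv R n dm dp (@Xtv R n dm dp t)|)
  <= 16 * ((1 + t * D ^ t)%N%:R) ^+ 2 / eps ^+ 2 *
     (((Delta dm dp ^ hh R dm dp) ^ 4)%N%:R / n%:R).
Proof.
move=> n0 Hmin Hbnd Hsum e0.
have dp_pos : forall i, (0 < dp i)%N by move=> i; case: (Hmin i) => _; apply: leq_trans.
have cardTH : #|{: tails dp}| = #|{: heads dm}| by rewrite !card_tails Hsum.
set De := Delta dm dp; set h := hh R dm dp; set a := (De ^ h)%N.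
have i0 : 'I_n := Ordinal n0.
have D2 : (2 <= De)%N.
  by case: (Hmin i0) => _ h2; apply: leq_trans h2 (leq_trans (leq_maxl _ _)
       (leq_bigmax (F := fun i => maxn (dp i) (dm i)) i0)).
have DD : (De <= D)%N.
  rewrite /De /Delta; apply/bigmax_leqP => i _.
  by case: (Hbnd i) => ? ?; rewrite geq_max; apply/andP.
have ha := @hh_bound R n dm dp n0 D2.
have Hd := @dev_n R n dm dp dp_pos cardTH t eps e0 (ltnW D2).
have cT : #|{: tails dp}| = mtot dm by rewrite card_tails /mtot Hsum.
rewrite cT in Hd.
apply: le_trans Hd _.
rewrite -/De -/h -/a.
have mn : (n <= mtot dm)%N.
  rewrite /mtot -[n in (n <= _)%N]card_ord -sum1_card.
  by apply: leq_sum => i _; case: (Hmin i) => ? _; apply: ltnW.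
have hlt : (h < a)%N by apply: ltn_expl.
have tK : (t * De ^ t <= t * D ^ t)%N.
  rewrite leq_mul2l; apply/orP; right.
  by elim: (t) => // k IH; rewrite !expnS leq_mul.
have a1 : (1 <= a * a)%N by rewrite muln_gt0 andbb expn_gt0 (ltn_trans _ D2).
have N1 : (h * De ^ h + t * De ^ t <= (1 + t * D ^ t) * (a * a))%N.
  rewrite mulnDl mul1n; apply: leq_add; first by rewrite -/a leq_mul2r ltnW ?orbT.
  by apply: leq_trans tK _; rewrite leq_pmulr.
set M : R := (mtot dm)%:R.
have M0 : 0 < M by rewrite ltr0n (leq_trans n0 mn).
have nM : (n%:R : R) <= M by rewrite ler_nat.
have n0' : (0 : R) < n%:R by rewrite ltr0n.
set u : R := (h * De ^ h + t * De ^ t)%N%:R.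
have -> : 4 * h%:R * De%:R ^+ h / M + 4 * t%:R * De%:R ^+ t / M = 4 * u / M.
  by rewrite -mulrDl -!mulrA -mulrDr /u natrD !natrM !natrX mulrA.
rewrite -/M E1_aux ?lt0r_neq0 //.
have u0 : 0 <= u by rewrite ler0n.
have uK : u <= (1 + t * D ^ t)%N%:R * (a * a)%N%:R by rewrite -natrM ler_nat.
have a4 : (a ^ 4)%N%:R = ((a * a)%N%:R : R) ^+ 2 by rewrite -natrX mulnn -expnM.
rewrite a4; move: u0 uK nM n0'; rewrite /M.
move: (u) ((1 + t * D ^ t)%N%:R) ((a * a)%N%:R) ((mtot dm)%:R) (n%:R) => x y z w v.
move=> x0 xyz vw v0.
rewrite (E2_aux y z v eps).
apply: ler_wpM2l; first by rewrite divr_ge0 ?sqr_ge0.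
apply: le_trans (_ : x ^+ 2 / v <= _).
  by apply: ler_wpM2l; rewrite ?sqr_ge0 // lef_pV2 ?posrE // (lt_le_trans v0 vw).
apply: ler_wpM2r; first by rewrite invr_ge0 ltW.
nra.
Qed.

Lemma x_small (R : realType) (a n : nat) (d : R) : (0 < n)%N -> (a ^ 10 <= n)%N -> 0 < d ->
  d ^- 5 < n%:R -> (a ^ 4)%N%:R / n%:R < d.
Proof.
move=> n0 an d0 dn.
set x : R := (a ^ 4)%N%:R / n%:R.
have n0' : (0 : R) < n%:R by rewrite ltr0n.
have x0 : 0 <= x by rewrite divr_ge0 ?ler0n.
have x5 : x ^+ 5 <= n%:R^-1.
  rewrite /x expr_div_n -natrX -expnM /=.
  rewrite ler_pdivrMr ?exprn_gt0 // exprS mulKf ?lt0r_neq0 //.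
  rewrite -natrX ler_nat.
  have -> : (4 * 5 = 10 * 2)%N by [].
  rewrite expnM; apply: leq_trans (_ : n ^ 2 <= _)%N; first by rewrite leq_exp2r.
  by rewrite leq_pexp2l.
rewrite ltNge; apply/negP => dx.
have : d ^+ 5 <= n%:R^-1 by apply: le_trans x5; rewrite lerXn2r // ?nnegrE ltW.
rewrite -[d ^+ 5]invrK lef_pV2 ?posrE ?invr_gt0 ?exprn_gt0 //.
by rewrite leNgt dn.
Qed.


End Helpers.
Import Helpers.
Local Open Scope classical_set_scope.
Local Open Scope ring_scope.

Theorem lemma5 (R : realType) (dm dp : forall n : nat, 'I_n -> nat)
  (Hsum : forall n, (\sum_(i < n) dm n i)%N = (\sum_(i < n) dp n i)%N)
  (Hmin : forall n (i : 'I_n), (2 <= dm n i)%N /\ (2 <= dp n i)%N)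
  (Hbnd : exists D : nat, forall n (i : 'I_n), (dm n i <= D)%N /\ (dp n i <= D)%N)
  (t : nat) :
  forall eps : R, 0 < eps -> dev_prob dm dp t eps @ \oo --> 0.
Proof.
move=> eps e0; case: Hbnd => D HD.
set C : R := 16 * (1 + t * D ^ t)%N%:R ^+ 2 / eps ^+ 2.
have C0 : 0 < C by rewrite /C divr_gt0 ?mulr_gt0 ?exprn_gt0 ?ltr0n.
apply/cvgr0Pnorm_lt => e e1.
set d := e / C.
have d0 : 0 < d by rewrite divr_gt0.
apply: filterS (nbhs_infty_ge (Num.truncn (d ^- 5)).+1) => n Nn.
have n0 : (0 < n)%N by apply: leq_trans Nn.
have Hp := @per_n R n (dm n) (dp n) t eps D n0 (Hmin n) (HD n) (Hsum n) e0.
have dev0 : 0 <= dev_prob dm dp t eps n by rewrite /dev_prob /Penv divr_ge0 ?ler0n.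
rewrite ger0_norm //.
apply: le_lt_trans (_ : C * ((Delta (dm n) (dp n) ^ hh R (dm n) (dp n)) ^ 4)%N%:R / n%:R < _).
  by rewrite -mulrA; exact: Hp.
rewrite -mulrA -ltr_pdivlMl // [X in X < _]mulrC [X in _ < X]mulrC -/d.
rewrite mulrC; apply: x_small => //.
- have i0 : 'I_n := Ordinal n0.
  have D2 : (1 < Delta (dm n) (dp n))%N.
    by case: (Hmin n i0) => _ h2; apply: leq_trans h2 (leq_trans (leq_maxl _ _)
       (leq_bigmax (F := fun i => maxn (dp n i) (dm n i)) i0)).
  have := @hh_bound R n (dm n) (dp n) n0 D2.
  by rewrite mulnC expnM.
- apply: lt_le_trans (truncnS_gt _) _; by rewrite ler_nat.
Qed.
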